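(* Let $x,y\in V(D^+)$ with $y\prec x$ and $y\in F$. Then $g(x,u)>g^*(y)$ for every $u\prec y$.
   Context: $G=(V,E,w)$ is a simple, connected, undirected graph with positive edge lengths, $s,t\in V$, $d(\cdot,\cdot)$ the shortest path distance in $G$. $D$ is the union of all shortest $st$-paths of $G$, and $D^+$ is the directed acyclic graph obtained from $D$ by orienting every edge toward $t$. $x\prec y$ means $x$ is an ancestor of $y$ in $D^+$ (a directed path of positive length from $x$ to $y$ exists). For $x\neq s$, $v\neq x$ is an $s$-dominator of $x$ if every directed path from $s$ to $x$ in $D^+$ contains $v$, and $I_s(x)$ is the $s$-dominator of $x$ closest to $x$ (every other $s$-dominator of $x$ is an $s$-dominator of $I_s(x)$). Symmetrically, for $x\neq t$, $v\neq x$ is a $t$-dominator of $x$ if every directed path from $x$ to $t$ in $D^+$ contains $v$, and $I_t(x)$ is the $t$-dominator closest to $x$. For $x\neq s$, $C(x)=\{v: I_s(x)\prec v\prec x\}$. For $x\neq s$ and $y\in V(D^+)$, $g(x,y)=d(y,x)$ if $y\in C(x)$ and $x\prec I_t(y)$, and $g(x,y)=\infty$ otherwise; $g^*(x)=\min_y g(x,y)$. $F=\{x\in V(D^+)\setminus\{s\}: g^*(x)\neq\infty\}$. *)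

(* Defs.v *)
From HB Require Import structures.
From mathcomp Require Import all_boot all_order all_algebra.
From mathcomp Require Import reals constructive_ereal.
From Stdlib Require Import ClassicalEpsilon Relations.
Set Implicit Arguments. Unset Strict Implicit. Unset Printing Implicit Defensive.
Import Order.TTheory GRing.Theory Num.Theory.
Local Open Scope ring_scope.

Section SPDefs.
Variables (R : realType) (T : finType) (e : rel T) (w : T -> T -> R)
  (d : T -> T -> R) (s t : T).

Fixpoint wlen (u : T) (p : seq T) : R :=
  match p with [::] => 0 | v :: p' => w u v + wlen v p' end.

Definition walk (u : T) (p : seq T) (v : T) : bool :=
  path e u p && (last u p == v).

Definition shortest_dist : Prop :=
  forall u v, (exists p, walk u p v /\ wlen u p = d u v) /\
              (forall p, walk u p v -> d u v <= wlen u p).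

Definition sp_walk (p : seq T) : Prop := walk s p t /\ wlen s p = d s t.

(* vertex set of D (= of D^+) *)
Definition inD (x : T) : Prop := exists p, sp_walk p /\ x \in s :: p.

(* arcs of D^+: edges of shortest st-paths, oriented toward t *)
Definition arc (u v : T) : Prop :=
  exists p p1 p2, sp_walk p /\ s :: p = p1 ++ u :: v :: p2.

Definition prec (x y : T) : Prop := clos_trans T arc x y.

Fixpoint dwalk (x : T) (p : seq T) : Prop :=
  match p with [::] => True | y :: p' => arc x y /\ dwalk y p' end.

Definition sdom (x v : T) : Prop :=
  v <> x /\ forall p, dwalk s p -> last s p = x -> v \in s :: p.

Definition tdom (x v : T) : Prop :=
  v <> x /\ forall p, dwalk x p -> last x p = t -> v \in x :: p.

Definition is_Is (x v : T) : Prop :=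
  sdom x v /\ forall v', sdom x v' -> v' <> v -> sdom v v'.
Definition is_It (x v : T) : Prop :=
  tdom x v /\ forall v', tdom x v' -> v' <> v -> tdom v v'.

Definition Is (x : T) : T := epsilon (inhabits x) (is_Is x).
Definition It (x : T) : T := epsilon (inhabits x) (is_It x).

Definition inC (x v : T) : Prop := prec (Is x) v /\ prec v x.

Definition g (x y : T) : \bar R :=
  if excluded_middle_informative (inC x y /\ prec x (It y))
  then (d y x)%:E else +oo%E.

Definition gstar (x : T) : \bar R := \big[Order.min/+oo%E]_(y : T) g x y.

Definition inF (x : T) : Prop := inD x /\ x <> s /\ gstar x <> +oo%E.

End SPDefs.

(* Main.v *)
Require Import Defs.
From HB Require Import structures.
From mathcomp Require Import all_boot all_order all_algebra.
From mathcomp Require Import reals constructive_ereal.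
From mathcomp Require Import lra.
From Stdlib Require Import ClassicalEpsilon Classical.
From Stdlib Require Relations.
Local Notation t_step := Relation_Operators.t_step.
Local Notation t_trans := Relation_Operators.t_trans.
Import Order.TTheory GRing.Theory Num.Theory.
Set Implicit Arguments. Unset Strict Implicit. Unset Printing Implicit Defensive.
Local Open Scope ring_scope.

Section Aux.
Variables (R : realType) (T : finType) (e : rel T) (w : T -> T -> R)
  (d : T -> T -> R) (s t : T).
Hypothesis w_pos : forall u v, e u v -> 0 < w u v.
Hypothesis hd : shortest_dist e w d.

Local Notation "a <<< b" := (prec e w d s t a b) (at level 70).
Local Notation dwalk := (dwalk e w d s t).

Lemma wlen_cat x p q : wlen w x (p ++ q) = wlen w x p + wlen w (last x p) q.
Proof. elim: p x => [|v p IH] x /=; first by rewrite add0r. by rewrite IH addrA. Qed.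

Lemma walk_cat x p y q z : walk e x p y -> walk e y q z -> walk e x (p ++ q) z.
Proof.
rewrite /walk cat_path last_cat => /andP[hp /eqP ->] /andP[hq hz].
by rewrite hp hq.
Qed.

Lemma d_le x p y : walk e x p y -> d x y <= wlen w x p.
Proof. by move=> h; case: (hd x y) => _ /(_ p h). Qed.

Lemma d_tri a b c : d a c <= d a b + d b c.
Proof.
case: (hd a b) => [[p [hp lp]] _]; case: (hd b c) => [[q [hq lq]] _].
have := d_le (walk_cat hp hq); rewrite wlen_cat.
have -> : last a p = b by case/andP: hp => _ /eqP.
by rewrite lp lq.
Qed.

Lemma d_edge u v : e u v -> d u v <= w u v.
Proof.
move=> h; have hw : walk e u [:: v] v by rewrite /walk /= h eqxx.
by have := d_le hw; rewrite /= addr0.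
Qed.

Lemma arc_ds u v : Defs.arc e w d s t u v -> e u v /\ d s u + w u v = d s v.
Proof.
case=> p [p1 [p2 [[hw hl] hs]]].
have [q [Ep hq]] : exists q, p = q ++ v :: p2 /\ last s q = u.
  case: p1 hs => [|a p1] /= [E1 E2]; first by exists [::]; rewrite E2 E1.
  by exists (rcons p1 u); rewrite E2 cat_rcons last_rcons.
rewrite Ep in hw hl.
rewrite /walk cat_path last_cat hq /= in hw.
case/andP: hw => /andP[pq /andP[euv pp2]] lt.
rewrite wlen_cat hq /= in hl.
have h1 : d s u <= wlen w s q by apply: d_le; rewrite /walk pq hq eqxx.
have h2 : d v t <= wlen w v p2 by apply: d_le; rewrite /walk pp2 lt.
have h3 := d_tri s v t. have h4 := d_tri s u v. have h5 := d_edge euv.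
split => //; lra.
Qed.

Lemma prec_ds a b : a <<< b -> d s a + d a b <= d s b /\ d s a < d s b.
Proof.
elim=> [u v /arc_ds [h1 h2]|a' b' c' _ [h1 h2] _ [h3 h4]].
  have := d_edge h1; have := w_pos h1; move=> h3 h4; split; lra.
have := d_tri a' b' c'; move=> h5; split; lra.
Qed.

Lemma sp_dwalk p : sp_walk e w d s t p -> dwalk s p.
Proof.
move=> hp.
suff H : forall r p1 x, s :: p = p1 ++ x :: r -> dwalk x r by exact: (H p [::] s).
elim=> [//|v r IH] p1 x hs /=; split.
  by exists p, p1, r.
by apply: (IH (rcons p1 x)); rewrite cat_rcons.
Qed.

Lemma dwalk_split x p a : dwalk x p -> a \in x :: p ->
  exists p1 p2, [/\ dwalk x p1, last x p1 = a, dwalk a p2 & last a p2 = last x p].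
Proof.
elim: p x => [|v p IH] x /=.
  by move=> _; rewrite inE => /eqP ->; exists [::], [::].
case=> hxv hv; rewrite inE => /orP[/eqP ->|ha].
  by exists [::], (v :: p).
have [p1 [p2 [h1 h2 h3 h4]]] := IH v hv ha.
by exists (v :: p1), p2.
Qed.

Lemma dwalk_prec x p : dwalk x p -> forall a, a \in p -> x <<< a.
Proof.
elim: p x => [//|v p IH] x /= [hxv hv] a; rewrite inE => /orP[/eqP ->|ha].
  by apply: t_step.
apply: t_trans; [apply: t_step; exact: hxv | exact: IH].
Qed.

Lemma dwalk_prec_last x p a : dwalk x p -> a \in x :: p -> a <> last x p ->
  a <<< last x p.
Proof.
move=> hp ha hne; have [p1 [p2 [_ _ h3 h4]]] := dwalk_split hp ha.
rewrite -h4; apply: (dwalk_prec h3).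
have := mem_last a p2; rewrite inE => /orP[/eqP E|//].
by case: hne; rewrite -h4 E.
Qed.

Lemma dwalk_cat x p q : dwalk x p -> dwalk (last x p) q -> dwalk x (p ++ q).
Proof. by elim: p x => //= v p IH x [h1 h2] h3; split => //; exact: IH. Qed.

Lemma prec_dwalk a b : a <<< b -> exists q, dwalk a q /\ last a q = b.
Proof.
elim=> [u v h|a' b' c' _ [q1 [h1 l1]] _ [q2 [h2 l2]]].
  by exists [:: v].
exists (q1 ++ q2); split; first by apply: dwalk_cat; rewrite ?l1.
by rewrite last_cat l1.
Qed.

Lemma arc_inD u v : Defs.arc e w d s t u v -> inD e w d s t u.
Proof.
case=> p [p1 [p2 [hp hs]]]; exists p; split => //.
by rewrite hs mem_cat inE eqxx orbT.
Qed.

Lemma prec_inD a b : a <<< b -> inD e w d s t a.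
Proof. by elim=> [u v /arc_inD|]. Qed.

Lemma inD_dwalk z : inD e w d s t z -> exists q, dwalk s q /\ last s q = z.
Proof.
case=> p [hp hz]; have [p1 [p2 [h1 h2 _ _]]] := dwalk_split (sp_dwalk hp) hz.
by exists p1.
Qed.

Definition Pb y v : bool :=
  if excluded_middle_informative (sdom e w d s t y v) then true else false.

Lemma PbP y v : Pb y v -> sdom e w d s t y v.
Proof. by rewrite /Pb; case: excluded_middle_informative. Qed.

Lemma PbI y v : sdom e w d s t y v -> Pb y v.
Proof. by rewrite /Pb; case: excluded_middle_informative. Qed.

Lemma Is_sdom y : inD e w d s t y -> y <> s -> sdom e w d s t y (Is e w d s t y).
Proof.
move=> hy hys.
suff [v hv] : exists v, is_Is e w d s t y v.
  by case: (epsilon_spec (inhabits y) _ (ex_intro _ v hv)).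
have hs : sdom e w d s t y s.
  by split; [move=> E; apply: hys; rewrite E | move=> p _ _; exact: mem_head].
case: (arg_maxP (fun v => d s v) (PbI hs)) => a Pa amax.
have sa := PbP Pa.
exists a; split => // v' hv' hne; split => // P hP hl.
have [q0 [hq0 lq0]] := inD_dwalk hy.
have [p1 [p2 [_ _ h3 h4]]] := dwalk_split hq0 (sa.2 q0 hq0 lq0).
have : v' \in s :: P ++ p2.
  apply: hv'.2; first by apply: dwalk_cat; rewrite ?hl.
  by rewrite last_cat hl h4.
rewrite -cat_cons mem_cat; case/orP => // hin. have [_ h] := prec_ds (dwalk_prec h3 hin).
have h' : d s v' <= d s a := amax v' (PbI hv').
by have := lt_le_trans h h'; rewrite ltxx.
Qed.

Lemma main x y (hyx : y <<< x) (hyF : inF e w d s t y) u (huy : u <<< y) :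
  (gstar e w d s t y < g e w d s t x u)%E.
Proof.
case: hyF => hyD [hys hg].
rewrite /g; destruct (excluded_middle_informative _) as [Hg|Hn]; last first.
  by rewrite ltey; apply/eqP.
case: Hg => [[hIx hux] hxIt] /=.
have [z0 hz0] : exists z0, inC e w d s t y z0 /\ y <<< It e w d s t z0.
  apply: NNPP => hn; apply: hg; rewrite /gstar; apply: (big_ind (fun v : \bar R => v = +oo%E)) => //.
    by move=> a b -> ->; rewrite minxx.
  move=> z _; rewrite /g; destruct (excluded_middle_informative _) as [h|] => //.
  by exfalso; apply: hn; exists z.
have [hds1 hds2] := prec_ds hyx.
have tri := d_tri s u x.
case: (lerP (d s u) (d s z0)) => hcmp.
  rewrite /gstar; apply: (le_lt_trans (bigmin_le _ z0 _)).
  rewrite /g; destruct (excluded_middle_informative _) as [Hy|[]] => /=; last by [].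
  rewrite lte_fin; have [h1 _] := prec_ds hz0.1.2; lra.
have hsd := Is_sdom hyD hys.
have [_ ha1] := prec_ds hz0.1.1.
have [P [hP hlP]] := inD_dwalk (prec_inD huy).
have [Q [hQ hlQ]] := prec_dwalk huy.
have hIu : Is e w d s t y <<< u.
  have : Is e w d s t y \in s :: P ++ Q.
    apply: hsd.2; first by apply: dwalk_cat; rewrite ?hlP.
    by rewrite last_cat hlP.
  rewrite -cat_cons mem_cat; case/orP.
  - move=> hin; have := dwalk_prec_last hP hin; rewrite hlP; apply.
    by move=> E; rewrite E in ha1; have := lt_trans ha1 hcmp; rewrite ltxx.
  - move=> hin; have [_ h] := prec_ds (dwalk_prec hQ hin).
    by have := lt_trans h (lt_trans ha1 hcmp); rewrite ltxx.
rewrite /gstar; apply: (le_lt_trans (bigmin_le _ u _)).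
rewrite /g; destruct (excluded_middle_informative _) as [Hy|[]] => /=; last first.
  by split; [split | apply: t_trans hyx hxIt].
rewrite lte_fin; have [h1 _] := prec_ds huy; lra.
Qed.

End Aux.

Theorem lemma7 (R : realType) (T : finType) (e : rel T) (w : T -> T -> R)
  (d : T -> T -> R) (s t : T)
  (e_sym : symmetric e) (e_irr : irreflexive e)
  (e_conn : forall u v, connect e u v)
  (w_sym : forall u v, w u v = w v u)
  (w_pos : forall u v, e u v -> 0 < w u v)
  (hd : shortest_dist e w d)
  (x y : T)
  (hx : inD e w d s t x) (hy : inD e w d s t y)
  (hyx : prec e w d s t y x) (hyF : inF e w d s t y) :
  forall u : T, prec e w d s t u y ->
    (gstar e w d s t y < g e w d s t x u)%E.
Proof. move=> u huy; exact: (@main R T e w d s t w_pos hd x y hyx hyF u huy). Qed.
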